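(* Let $f:X\to Y$ be a continuous map between metric spaces, with $X$ complete. If $f$ has the bounded path-lifting property for every rectifiable path $p:[0,1]\to Y$, then $f$ has the continuation property for every rectifiable path $p:[0,1]\to Y$. Consequently, if in addition $Y$ is path-connected and locally $\mathcal R$-contractible and $f$ is a local homeomorphism, then $f$ is a covering projection.
   Context: Length of a path $p:[a,b]\to Y$: $\ell(p)=\sup\sum_{i}d(p(t_i),p(t_{i+1}))$ over partitions of $[a,b]$; $p$ is rectifiable if $\ell(p)<\infty$. $\mathcal R$ denotes the family of all rectifiable paths $[0,1]\to Y$. $Y$ is locally $\mathcal R$-contractible if every $y_0\in Y$ has an open neighborhood $U$ with a continuous homotopy $H:U\times[0,1]\to U$ such that $H(y_0,t)=y_0$ for all $t$, $H(y,0)=y_0$, $H(y,1)=y$ for all $y\in U$, and each path $t\mapsto H(y,t)$ is rectifiable. For non-isolated $x\in X$, $D_x^-f=\liminf_{z\to x,\,z\neq x}\frac{d(f(z),f(x))}{d(z,x)}$; $X$ is assumed to have no isolated points. $f$ has the continuation property for $p:[0,1]\to Y$ if for every $b\in(0,1]$ and every continuous $q:[0,b)\to X$ with $f\circ q=p$ on $[0,b)$ there is a sequence $t_n\to b$ in $[0,b)$ with $(q(t_n))$ convergent in $X$. $f$ has the bounded path-lifting property for $p:[0,1]\to Y$ if for every $b\in(0,1]$ and every continuous $q:[0,b)\to X$ with $f\circ q=p$ on $[0,b)$ there exists $\alpha>0$ with $\inf\{D_x^-f:x\in\operatorname{Im}q\}\ge\alpha$. *)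

(* Defs.v *)
From HB Require Import structures.
From mathcomp Require Import all_boot all_order all_algebra.
From mathcomp Require Import all_classical all_reals all_analysis.

Set Implicit Arguments.
Unset Strict Implicit.
Unset Printing Implicit Defensive.

Import Order.TTheory GRing.Theory Num.Theory.
Import numFieldTopology.Exports.
Local Open Scope classical_set_scope.
Local Open Scope ring_scope.

Section Defs.
Context {R : realType}.

Definition complete_metric (X : metricType R) : Prop :=
  forall u : nat -> X,
    (forall e : R, 0 < e -> exists N : nat,
        forall m n : nat, (N <= m)%N -> (N <= n)%N -> mdist (u m) (u n) < e) ->
    exists x : X, u @ \oo --> x.

Definition no_isolated_points (X : metricType R) : Prop :=
  forall (x : X) (r : R), 0 < r -> exists z : X, z <> x /\ mdist z x < r.

(** [s] lists the partition points after [a]: a = t_0 <= t_1 <= ... <= t_n = b,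
    with s = [:: t_1; ...; t_n]. *)
Definition partition_of (a b : R) (s : seq R) : Prop :=
  sorted <=%R (a :: s) /\ last a s = b.

Definition partition_sum {Y : metricType R} (p : R -> Y) (a : R) (s : seq R) : R :=
  \sum_(i < size s) mdist (p (nth a (a :: s) i)) (p (nth a s i)).

Definition path_length {Y : metricType R} (p : R -> Y) (a b : R) : \bar R :=
  ereal_sup [set (partition_sum p a s)%:E | s in [set s | partition_of a b s]].

Definition rectifiable {Y : metricType R} (p : R -> Y) : Prop :=
  {within `[0, 1], continuous p} /\ (path_length p 0 1 < +oo)%E.

(** D_x^- f = liminf_{z -> x, z <> x} d(f z, f x) / d(z, x), written as
    sup_{r > 0} inf_{0 < d(z,x) < r} d(f z, f x) / d(z, x). *)
Definition lower_scaling {X Y : metricType R} (f : X -> Y) (x : X) : \bar R :=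
  ereal_sup [set ereal_inf
      [set (mdist (f z) (f x) / mdist z x)%:E
        | z in [set z | 0 < mdist z x < r]]
    | r in [set r : R | 0 < r]].

Definition continuation_property {X Y : metricType R} (f : X -> Y) (p : R -> Y) : Prop :=
  forall b : R, 0 < b <= 1 ->
  forall q : R -> X, {within `[0, b[, continuous q} ->
    (forall t, 0 <= t < b -> f (q t) = p t) ->
    exists tn : nat -> R, (forall n, 0 <= tn n < b) /\ tn @ \oo --> b /\
      exists x : X, (q \o tn) @ \oo --> x.

Definition bounded_path_lifting_property {X Y : metricType R} (f : X -> Y) (p : R -> Y)
  : Prop :=
  forall b : R, 0 < b <= 1 ->
  forall q : R -> X, {within `[0, b[, continuous q} ->
    (forall t, 0 <= t < b -> f (q t) = p t) ->
    exists alpha : R, 0 < alpha /\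
      (alpha%:E <= ereal_inf [set lower_scaling f x | x in q @` `[0%R, b[])%E.

Definition path_connected_space (Y : metricType R) : Prop :=
  forall y1 y2 : Y, exists g : R -> Y,
    {within `[0, 1], continuous g} /\ g 0 = y1 /\ g 1 = y2.

Definition locally_R_contractible (Y : metricType R) : Prop :=
  forall y0 : Y, exists U : set Y, open U /\ U y0 /\
    exists H : Y * R -> Y,
      {within U `*` `[0, 1], continuous H} /\
      (forall y t, U y -> 0 <= t <= 1 -> U (H (y, t))) /\
      (forall t, 0 <= t <= 1 -> H (y0, t) = y0) /\
      (forall y, U y -> H (y, 0) = y0) /\
      (forall y, U y -> H (y, 1) = y) /\
      (forall y, U y -> rectifiable (fun t => H (y, t))).

Definition homeo_onto {X Y : metricType R} (f : X -> Y) (U : set X) (V : set Y) : Prop :=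
  f @` U = V /\ {within U, continuous f} /\ {in U &, injective f} /\
  exists g : Y -> X, {within V, continuous g} /\ (forall x, U x -> g (f x) = x).

Definition local_homeomorphism {X Y : metricType R} (f : X -> Y) : Prop :=
  forall x : X, exists U : set X, open U /\ U x /\ open (f @` U) /\
    homeo_onto f U (f @` U).

Definition evenly_covered {X Y : metricType R} (f : X -> Y) (V : set Y) : Prop :=
  exists Us : set (set X),
    (forall U, Us U -> open U /\ homeo_onto f U V) /\
    (forall U U', Us U -> Us U' -> U <> U' -> U `&` U' = set0) /\
    f @^-1` V = \bigcup_(U in Us) U.

Definition covering_projection {X Y : metricType R} (f : X -> Y) : Prop :=
  continuous f /\
  forall y : Y, exists V : set Y, open V /\ V y /\ evenly_covered f V.

End Defs.

(* Main.v *)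
Require Import Defs.
From HB Require Import structures.
From mathcomp Require Import all_boot all_order all_algebra.
From mathcomp Require Import all_classical all_reals all_analysis.
From mathcomp Require Import lra zify ring.

Import Order.TTheory GRing.Theory Num.Theory.
Import numFieldTopology.Exports.
Local Open Scope classical_set_scope.
Local Open Scope ring_scope.


Section A.
Context {R : realType}.

Definition cont_on {T U : pseudoMetricType R} (A : set T) (f : T -> U) :=
  forall x, A x -> forall e, 0 < e -> exists2 d, 0 < d &
    forall y, A y -> ball x d y -> ball (f x) e (f y).

Lemma within_contP {T U : pseudoMetricType R} (A : set T) (f : T -> U) :
  {within A, continuous f} <-> cont_on A f.
Proof.
rewrite subspace_continuousP; split.
- move=> H x Ax e e0.
  have := H x Ax (ball (f x) e) (nbhsx_ballx _ _ e0).
  move=> /nbhs_ballP [d /= d0 Hd]; exists d => // y Ay bxy.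
  exact: (Hd y bxy Ay).
- move=> H x Ax P /nbhs_ballP [e /= e0 He].
  have [d d0 Hd] := H x Ax e e0.
  apply/nbhs_ballP; exists d => //= y bxy Ay.
  exact: He (Hd y Ay bxy).
Qed.

Lemma ballRE (x y e : R) : ball x e y <-> `|x - y| < e.
Proof. by rewrite -ball_normE. Qed.
Lemma ballME (T : metricType R) (x y : T) e : ball x e y <-> mdist x y < e.
Proof. by rewrite ballEmdist. Qed.

Definition Ic (a c : R) := [set t : R | a <= t <= c].
Definition Ico (a c : R) := [set t : R | a <= t < c].

Lemma IcE a c : `[a, c]%classic = Ic a c.
Proof. by apply/funext => t; rewrite /= in_itv /=. Qed.
Lemma IcoE a c : `[a, c[%classic = Ico a c.
Proof. by apply/funext => t; rewrite /= in_itv /=. Qed.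

Lemma cont_onS {T U : pseudoMetricType R} {A B : set T} {f : T -> U} :
  B `<=` A -> cont_on A f -> cont_on B f.
Proof.
move=> BA H x Bx e e0; have [d d0 Hd] := H x (BA _ Bx) e e0.
by exists d => // y By; apply: Hd; apply: BA.
Qed.

Lemma cont_on_comp {T U V : pseudoMetricType R} {A : set T} {B : set U}
   {f : T -> U} {g : U -> V} :
  cont_on A f -> cont_on B g -> (forall x, A x -> B (f x)) -> cont_on A (g \o f).
Proof.
move=> cf cg AB x Ax e e0.
have [d1 d10 H1] := cg (f x) (AB x Ax) e e0.
have [d2 d20 H2] := cf x Ax d1 d10.
by exists d2 => // y Ay bxy; apply: H1; [apply: AB | apply: H2].
Qed.

Lemma cont_on_ext {T U : pseudoMetricType R} {A : set T} {f g : T -> U} :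
  (forall x, A x -> f x = g x) -> cont_on A f -> cont_on A g.
Proof.
move=> fg H x Ax e e0; have [d d0 Hd] := H x Ax e e0.
by exists d => // y Ay bxy; rewrite -!fg //; apply: Hd.
Qed.

Lemma cont_on_cst {T U : pseudoMetricType R} (A : set T) (c : U) :
  cont_on A (fun _ : T => c).
Proof. by move=> x _ e e0; exists 1 => // y _ _; exact: ballxx. Qed.

Lemma RI (s t : R) (P : R -> Prop) : s <= t ->
  (forall u, s <= u <= t -> (forall w, s <= w < u -> P w) ->
     exists2 e, 0 < e & forall w, s <= w -> w < u + e -> w <= t -> P w) ->
  forall w, s <= w <= t -> P w.
Proof.
move=> st step.
pose A := [set u | s <= u <= t /\ forall w, s <= w < u -> P w].
have As : A s by split; [rewrite lexx st | move=> w /andP[a b]; lra].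
have ubt : ubound A t by move=> u [/andP[_ ->]].
have hs : has_sup A by split; [exists s | exists t].
pose m := sup A.
have sm : s <= m by exact: sup_upper_bound.
have mt : m <= t by apply: ge_sup => //; exists s.
have below : forall w, s <= w < m -> P w.
  move=> w /andP[sw wm].
  have wm' : 0 < m - w by rewrite subr_gt0.
  have [u [_ Pu] ltu] := sup_adherent wm' hs.
  apply: Pu; apply/andP; split => //; move: ltu; rewrite /m; lra.
have [e e0 He] := step m (introT andP (conj sm mt)) below.
have mt' : m = t.
  apply/eqP; rewrite eq_le mt /=; rewrite leNgt; apply/negP => mlt.
  pose v := Num.min (m + e / 2) t.
  have Av : A v.
    split.
      apply/andP; split; rewrite /v.
        by rewrite le_min; apply/andP; split; lra.
      by rewrite ge_min lexx orbT.
    move=> w /andP[sw wv]; apply: He => //.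
      by move: wv; rewrite /v lt_min => /andP[a _]; lra.
    by move: wv; rewrite /v lt_min => /andP[_ a]; lra.
  have := sup_upper_bound hs Av; rewrite -/m /v ge_min.
  case/orP; lra.
move=> w /andP[sw wt]; apply: He => //; rewrite -mt' in wt *; lra.
Qed.

Lemma glue_cont {U : pseudoMetricType R} (a m c : R) (q1 q2 : R -> U) :
  a <= m -> m <= c -> cont_on (Ic a m) q1 -> cont_on (Ic m c) q2 -> q1 m = q2 m ->
  cont_on (Ic a c) (fun t => if t <= m then q1 t else q2 t).
Proof.
move=> am mc c1 c2 e12 x /andP[ax xc] e e0.
have [xm|mx|xm] := ltgtP x m.
- have [d d0 Hd] := c1 x (introT andP (conj ax (ltW xm))) e e0.
  exists (Num.min d (m - x)); first by rewrite lt_min d0 subr_gt0 xm.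
  move=> y /andP[ay yc] /ballRE; rewrite lt_min => /andP[h1 h2].
  have ym : y <= m by move: h2; rewrite ltr_norml; lra.
  rewrite ym; apply: Hd; first by rewrite /Ic /= ay ym.
  exact/ballRE.
- have [d d0 Hd] := c2 x (introT andP (conj (ltW mx) xc)) e e0.
  exists (Num.min d (x - m)); first by rewrite lt_min d0 subr_gt0 mx.
  move=> y /andP[ay yc] /ballRE; rewrite lt_min => /andP[h1 h2].
  have ym : m < y by move: h2; rewrite ltr_norml; lra.
  rewrite leNgt ym /=; apply: Hd; first by rewrite /Ic /= (ltW ym) yc.
  exact/ballRE.
- subst x.
  have [d1 d10 Hd1] := c1 m (introT andP (conj am (lexx m))) e e0.
  have [d2 d20 Hd2] := c2 m (introT andP (conj (lexx m) mc)) e e0.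
  exists (Num.min d1 d2); first by rewrite lt_min d10 d20.
  move=> y /andP[ay yc] /ballRE; rewrite lt_min => /andP[h1 h2].
  case: ifP => ym.
    by apply: Hd1; [rewrite /Ic /= ay ym | exact/ballRE].
  rewrite e12; apply: Hd2; last exact/ballRE.
  by rewrite /Ic /= yc andbT; move: ym => /negbT; rewrite -ltNge => /ltW.
Qed.

Lemma cont_on_refl {U : pseudoMetricType R} {a c : R} {q : R -> U} :
  cont_on (Ic a c) q -> cont_on (Ic (- c) (- a)) (fun t => q (- t)).
Proof.
move=> H x /andP[h1 h2] e e0.
have hx : Ic a c (- x) by rewrite /Ic /= lerNr h2 lerNl h1.
have [d d0 Hd] := H (- x) hx e e0.
exists d => // y /andP[y1 y2] /ballRE bxy; apply: Hd.
  by rewrite /Ic /= lerNr y2 lerNl y1.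
by apply/ballRE; rewrite -opprD normrN.
Qed.

End A.


Section B.
Context {R : realType}.

Section Len.
Context {Y : metricType R}.
Implicit Types (p : R -> Y).

Lemma psum_rcons p a s v : partition_sum p a (rcons s v) =
  partition_sum p a s + mdist (p (last a s)) (p v).
Proof.
rewrite /partition_sum size_rcons big_ord_recr /=; congr (_ + _).
  apply: eq_bigr => i _ /=.
  rewrite -rcons_cons !nth_rcons /= ltnS (ltnW (ltn_ord i)) (ltn_ord i).
  by [].
rewrite -rcons_cons !nth_rcons /= ltnn eqxx ltnS leqnn.
by rewrite (last_nth a).
Qed.

Lemma plen_ext p a u v : u <= v ->
  (path_length p a u + (mdist (p u) (p v))%:E <= path_length p a v)%E.
Proof.
move=> uv.
rewrite -leeBrDr //.
apply: ge_ereal_sup => _ [s [ss ls] <-].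
rewrite leeBrDr //.
rewrite -EFinD.
apply: ereal_sup_ubound; exists (rcons s v); last by rewrite psum_rcons ls.
split; last by rewrite last_rcons.
rewrite /= rcons_path; move: ss; rewrite /= => -> /=; rewrite ls.
all: try done.
Qed.

Lemma plen_ge0 p a u : a <= u -> (0 <= path_length p a u)%E.
Proof.
move=> au.
have h : [set (partition_sum p a s)%:E | s in [set s | partition_of a u s]]
   (partition_sum p a [:: u])%:E by exists [:: u] => //; split => //=; rewrite andbT.
apply: le_trans (ereal_sup_ubound h).
rewrite /partition_sum /= big_ord1 /= lee_fin; exact: mdist_ge0.
Qed.

Definition Lr p u := fine (path_length p 0 u).

Lemma LrE p u : rectifiable p -> 0 <= u <= 1 -> path_length p 0 u = (Lr p u)%:E.
Proof.
move=> [_ fin] /andP[u0 u1]; rewrite /Lr fineK // ge0_fin_numE ?plen_ge0 //.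
apply: le_lt_trans fin.
have h := plen_ext p 0 u 1 u1.
apply: le_trans h; apply: leeDl; rewrite lee_fin; exact: mdist_ge0.
Qed.

Lemma Lr_ext {p u v} : rectifiable p -> 0 <= u -> u <= v -> v <= 1 ->
  Lr p u + mdist (p u) (p v) <= Lr p v.
Proof.
move=> rp u0 uv v1.
have := plen_ext p 0 u v uv.
have hu : 0 <= u <= 1 by apply/andP; split => //; lra.
have hv : 0 <= v <= 1 by apply/andP; split => //; lra.
rewrite (LrE _ _ rp hu) (LrE _ _ rp hv).
by rewrite -EFinD lee_fin.
Qed.

Lemma Lr_mono {p u v} : rectifiable p -> 0 <= u -> u <= v -> v <= 1 -> Lr p u <= Lr p v.
Proof.
move=> rp u0 uv v1; apply: le_trans (Lr_ext rp u0 uv v1).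
by rewrite lerDl mdist_ge0.
Qed.

End Len.

Section Part1.
Context {X Y : metricType R} (f : X -> Y).

Lemma ls_local {x a} : 0 < a -> (a%:E <= lower_scaling f x)%E ->
  exists2 r, 0 < r & forall z, mdist z x < r -> a / 2 * mdist z x <= mdist (f z) (f x).
Proof.
move=> a0 ha.
have : ((a / 2)%:E < lower_scaling f x)%E.
  by apply: lt_le_trans ha; rewrite lte_fin; lra.
move=> /ereal_sup_gt [_ [r r0 <-] hr].
exists r => // z dz.
have [zx|zx] := eqVneq (mdist z x) 0.
  by rewrite zx mulr0 mdist_ge0.
have dpos : 0 < mdist z x by rewrite lt_neqAle eq_sym zx mdist_ge0.
have : ((a / 2)%:E <= (mdist (f z) (f x) / mdist z x)%:E)%E.
  apply: ltW; apply: lt_le_trans hr _.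
  apply: ereal_inf_lbound; exists z => //=; rewrite dpos dz.
  by [].
by rewrite lee_fin ler_pdivlMr.
Qed.


Lemma key_est {p : R -> Y} {q : R -> X} {b a} : rectifiable p -> 0 < b -> b <= 1 ->
  cont_on (Ico 0 b) q -> (forall t, 0 <= t < b -> f (q t) = p t) -> 0 < a ->
  (forall t, 0 <= t < b -> (a%:E <= lower_scaling f (q t))%E) ->
  forall s t, 0 <= s -> s <= t -> t < b ->
  a / 2 * mdist (q s) (q t) <= Lr p t - Lr p s.
Proof.
move=> rp b0 b1 cq hq a0 hl s t s0 st tb.
have c0 : 0 < a / 2 by lra.
set c := a / 2 in c0 *.
suff H : forall w, s <= w <= t -> c * mdist (q s) (q w) <= Lr p w - Lr p s.
  by apply: H; rewrite st lexx.
apply: RI => // u /andP[su ut] IH.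
have hu : Ico 0 b u by rewrite /Ico /=; apply/andP; split; lra.
have Pu : c * mdist (q s) (q u) <= Lr p u - Lr p s.
  move: su; rewrite le_eqVlt => /orP[/eqP<-|lt].
    by rewrite mdistxx mulr0 subrr.
  apply/ler_addgt0Pr => eps eps0.
  have [d d0 Hd] := cq u hu (eps / c) (divr_gt0 eps0 c0).
  pose w := Num.max s (u - d / 2).
  have sw : s <= w by rewrite /w le_max lexx.
  have wu : w < u by rewrite /w gt_max lt; apply/andP; split => //; lra.
  have Pw := IH w (introT andP (conj sw wu)).
  have hw : Ico 0 b w by rewrite /Ico /=; apply/andP; split; lra.
  have bw : ball u d w.
    apply/ballRE; rewrite ger0_norm; last lra.
    have : u - d / 2 <= w by rewrite /w le_max lexx orbT.
    lra.
  have /ballME h1 := Hd w hw bw.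
  have h2 : c * mdist (q u) (q w) < eps.
    by move: h1; rewrite -(ltr_pM2l c0) mulrCA divff ?mulr1 // gt_eqF.
  have h3 : Lr p w <= Lr p u by apply: Lr_mono => //; lra.
  have h4 : c * mdist (q s) (q u) <= c * mdist (q s) (q w) + c * mdist (q u) (q w).
    rewrite -mulrDr; apply: ler_wpM2l; first lra.
    by rewrite (metric_sym (q u)); apply: metric_triangle.
  lra.
have [r r0 Hr] := ls_local a0 (hl u hu).
have [d d0 Hd] := cq u hu r r0.
exists d => // w sw wud wt.
case: (ltP w u) => [wu|uw]; first by apply: IH; rewrite sw wu.
have hw : Ico 0 b w by rewrite /Ico /=; apply/andP; split; lra.
have bw : ball u d w by apply/ballRE; rewrite ler0_norm; lra.
have /ballME h1 := Hd w hw bw.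
have h2 := Hr (q w); rewrite metric_sym in h2; have {h2} h2 := h2 h1.
rewrite hq ?hq in h2; [|by apply/andP; split; lra|by apply/andP; split; lra].
have h3 := @Lr_ext _ p u w rp ltac:(lra) uw ltac:(lra).
have h4 : c * mdist (q s) (q w) <= c * mdist (q s) (q u) + c * mdist (q w) (q u).
  rewrite -mulrDr; apply: ler_wpM2l; first lra.
  by rewrite (metric_sym (q w) (q u)); apply: metric_triangle.
rewrite metric_sym in h3; rewrite -/c in h2; rewrite (metric_sym (q w) (q u)) in h4.
lra.
Qed.

Definition tseq (b : R) (n : nat) := b - b / n.+2%:R.

Lemma tn_facts {b : R} : 0 < b ->
  let tn := tseq b in
  (forall n, 0 <= tn n < b) /\ (forall m n, (m <= n)%N -> tn m <= tn n) /\
  tn @ \oo --> b.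
Proof.
move=> b0 tn; rewrite /tn /tseq; split; [|split].
- move=> n; rewrite /tn.
  have h : 0 < b / n.+2%:R by rewrite divr_gt0.
  have h2 : b / n.+2%:R <= b.
    rewrite ler_pdivrMr ?ltr0n // ler_peMr ?(ltW b0) //.
    by rewrite (ler_nat R 1 n.+2).
  move: h h2; set x := b / n.+2%:R => h h2.
  apply/andP; split; lra.
- move=> m n mn; rewrite /tn lerD2l lerN2 ler_pM2l // lef_pV2 ?posrE ?ltr0n //.
  by rewrite ler_nat.
- apply/cvgrPdist_lt => e e0.
  exists (Num.Def.archi_bound (b / e)) => // n /= hn.
  rewrite /tn opprB addrC subrK ger0_norm; last by rewrite ltW // divr_gt0.
  rewrite ltr_pdivrMr ?ltr0n // -ltr_pdivrMl //.
  have := archi_boundP (ltW (divr_gt0 b0 e0)).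
  move=> h.
rewrite mulrC; apply: (lt_le_trans h); rewrite ler_nat; apply: (leq_trans hn); by rewrite -addn2 leq_addr.
Qed.

Lemma part1 (p : R -> Y) : complete_metric X -> rectifiable p ->
  bounded_path_lifting_property f p -> continuation_property f p.
Proof.
move=> cX rp bpl b /andP[b0 b1] q cq hq.
have [a [a0 ha]] := bpl b (introT andP (conj b0 b1)) q cq hq.
have hl : forall t, 0 <= t < b -> (a%:E <= lower_scaling f (q t))%E.
  move=> t ht; apply: le_trans ha _; apply: ereal_inf_lbound.
  by exists (q t) => //; exists t => //; rewrite /= in_itv /=.
have cq' : cont_on (Ico 0 b) q by apply/within_contP; rewrite -IcoE.
have [tb [tmono tcvg]] := tn_facts b0.
set tn := tseq b in tb tmono tcvg.
exists tn; split => //; split => //.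
have c0 : 0 < a / 2 by lra.
have ke := key_est rp b0 b1 cq' hq a0 hl.
have hL : cvgn (fun n => Lr p (tn n)).
  apply: nondecreasing_is_cvgn.
    move=> m n mn; apply: Lr_mono => //.
    - by have /andP[] := tb m.
    - exact: tmono.
    - by have /andP[_ h] := tb n; lra.
  exists (Lr p 1) => _ [n _ <-]; apply: Lr_mono => //.
  - by have /andP[] := tb n.
  - by have /andP[_ h] := tb n; lra.
apply: cX => e e0.
have ce0 : 0 < a / 2 * e / 2 by rewrite divr_gt0 // mulr_gt0.
have [N _ HN] := proj1 (cvgrPdist_lt _ _) hL _ ce0.
exists N => m n hm hn.
have hm' := HN m hm; have hn' := HN n hn; rewrite /= in hm' hn'.
set l := lim _ in hm' hn'.
suff : a / 2 * mdist (q (tn m)) (q (tn n)) < a / 2 * e.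
  by rewrite ltr_pM2l.
have [mn|nm] := leqP m n.
  have := ke (tn m) (tn n) ltac:(by have /andP[] := tb m) (tmono _ _ mn)
     ltac:(by have /andP[] := tb n).
  move: hm' hn'; rewrite !ltr_norml; lra.
have := ke (tn n) (tn m) ltac:(by have /andP[] := tb n) (tmono _ _ (ltnW nm))
     ltac:(by have /andP[] := tb m).
rewrite metric_sym.
move: hm' hn'; rewrite !ltr_norml; lra.
Qed.

End Part1.
End B.


Section C.
Context {R : realType} {X Y : metricType R} (f : X -> Y).
Hypothesis lh : local_homeomorphism f.
Hypothesis cf : continuous f.

Lemma open_ballP {T : metricType R} {W : set T} {x} : open W -> W x ->
  exists2 r, 0 < r & forall y, mdist x y < r -> W y.
Proof.
move=> oW Wx; have : nbhs x W by apply: open_nbhs_nbhs.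
move=> /nbhs_ballP [r r0 H]; exists r => // y hy; apply: H; exact/ballME.
Qed.

Lemma lh_inj x : exists2 r, 0 < r & forall z z', mdist x z < r -> mdist x z' < r ->
  f z = f z' -> z = z'.
Proof.
have [W [oW [Wx [_ [_ [_ [inj _]]]]]]] := lh x.
have [r r0 H] := open_ballP oW Wx.
exists r => // z z' h1 h2 e; apply: inj => //; rewrite inE; exact: H.
Qed.

Lemma lh_inv x : exists (W : set X) (Os : set Y) (g : Y -> X),
  [/\ open W, W x, open Os, Os (f x) &
  [/\ cont_on Os g, (forall o, Os o -> f (g o) = o /\ W (g o)) &
      (forall z, W z -> g (f z) = z /\ Os (f z))]].
Proof.
have [W [oW [Wx [oO [_ [_ [_ [g [cg gf]]]]]]]]] := lh x.
exists W, (f @` W), g; split => //.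
split.
- exact/within_contP.
- by move=> _ [z Wz <-]; rewrite gf.
- by move=> z Wz; split; [rewrite gf | exists z].
Qed.

Lemma uniq_fwd {a c} {q1 q2 : R -> X} : a <= c ->
  cont_on (Ic a c) q1 -> cont_on (Ic a c) q2 ->
  (forall t, Ic a c t -> f (q1 t) = f (q2 t)) -> q1 a = q2 a ->
  forall t, Ic a c t -> q1 t = q2 t.
Proof.
move=> ac c1 c2 hf h0.
suff H : forall w, a <= w <= c -> q1 w = q2 w by [].
apply: RI => // u /andP[au uc] IH.
have hu : Ic a c u by rewrite /Ic /= au uc.
have Pu : q1 u = q2 u.
  move: au; rewrite le_eqVlt => /orP[/eqP<- // | lt].
  apply: mdist_positivity; apply/eqP; rewrite eq_le mdist_ge0 andbT.
  apply/ler_addgt0Pr => e e0; rewrite add0r.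
  have e20 : 0 < e / 2 by lra.
  have [d1 d10 H1] := c1 u hu _ e20.
  have [d2 d20 H2] := c2 u hu _ e20.
  pose w := Num.max a (u - Num.min d1 d2 / 2).
  have hmin : 0 < Num.min d1 d2 by rewrite lt_min d10 d20.
  have aw : a <= w by rewrite /w le_max lexx.
  have wu : w < u by rewrite /w gt_max lt /=; lra.
  have w2 : u - Num.min d1 d2 / 2 <= w by rewrite /w le_max lexx orbT.
  have hw : Ic a c w by rewrite /Ic /= aw /=; lra.
  have m1 : Num.min d1 d2 <= d1 by rewrite ge_min lexx.
  have m2 : Num.min d1 d2 <= d2 by rewrite ge_min lexx orbT.
  have /ballME b1 : ball (q1 u) (e / 2) (q1 w).
    by apply: H1 => //; apply/ballRE; rewrite ger0_norm; lra.
  have /ballME b2 : ball (q2 u) (e / 2) (q2 w).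
    by apply: H2 => //; apply/ballRE; rewrite ger0_norm; lra.
  have Pw := IH w (introT andP (conj aw wu)).
  have := metric_triangle (q1 u) (q1 w) (q2 u).
  rewrite {2}Pw (metric_sym (q2 w)); lra.
have [r r0 Hr] := lh_inj (q1 u).
have [d1 d10 H1] := c1 u hu _ r0.
have [d2 d20 H2] := c2 u hu _ r0.
exists (Num.min d1 d2); first by rewrite lt_min d10 d20.
move=> w aw wud wc.
case: (ltP w u) => [wu|uw]; first by apply: IH; rewrite aw wu.
have hw : Ic a c w by rewrite /Ic /= aw wc.
have m1 : Num.min d1 d2 <= d1 by rewrite ge_min lexx.
have m2 : Num.min d1 d2 <= d2 by rewrite ge_min lexx orbT.
have /ballME b1 : ball (q1 u) r (q1 w).
  by apply: H1 => //; apply/ballRE; rewrite ler0_norm; lra.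
have /ballME b2 : ball (q2 u) r (q2 w).
  by apply: H2 => //; apply/ballRE; rewrite ler0_norm; lra.
rewrite -Pu in b2.
exact: Hr b1 b2 (hf w hw).
Qed.

Lemma metric_seq_unique {T : metricType R} (u : nat -> T) (a b : T) :
  u @ \oo --> a -> u @ \oo --> b -> a = b.
Proof.
move=> ha hb; apply: mdist_positivity; apply/eqP; rewrite eq_le mdist_ge0 andbT.
apply/ler_addgt0Pr => e e0; rewrite add0r.
have e20 : 0 < e / 2 by lra.
have [N1 _ H1] := proj1 (cvg_ballP _ _) ha _ e20.
have [N2 _ H2] := proj1 (cvg_ballP _ _) hb _ e20.
have /ballME h1 := H1 (maxn N1 N2) (leq_maxl _ _).
have /ballME h2 := H2 (maxn N1 N2) (leq_maxr _ _).
have := metric_triangle a (u (maxn N1 N2)) b.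
rewrite (metric_sym (u _) b); lra.
Qed.

Definition liftP (p : R -> Y) x0 c (q : R -> X) :=
  [/\ cont_on (Ic 0 c) q, q 0 = x0 & forall t, Ic 0 c t -> f (q t) = p t].

Lemma ext_lift {p x0 ts c q0} {Os : set Y} {g} : 0 <= ts -> ts <= c ->
  liftP p x0 ts q0 -> cont_on (Ic ts c) p -> (forall t, Ic ts c t -> Os (p t)) ->
  cont_on Os g -> (forall o, Os o -> f (g o) = o) -> g (p ts) = q0 ts ->
  liftP p x0 c (fun t => if t <= ts then q0 t else g (p t)).
Proof.
move=> ts0 tsc [c0 v0 f0] cp Op cg fg gts; split.
- apply: glue_cont => //.
    exact: (cont_on_comp cp cg Op).
- by rewrite ts0.
- move=> t /andP[t0 tc]; case: ifP => h; first by apply: f0; rewrite /Ic /= t0 h.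
  apply: fg; apply: Op; rewrite /Ic /= tc andbT.
  by move: h => /negbT; rewrite -ltNge => /ltW.
Qed.

Lemma lift_exists p x0 : rectifiable p -> continuation_property f p ->
  f x0 = p 0 -> exists q, liftP p x0 1 q.
Proof.
move=> rp CP fx0.
have cp : cont_on (Ic 0 1) p by case: rp => + _; rewrite IcE => /within_contP.
suff H : forall w, 0 <= w <= 1 -> exists q, liftP p x0 w q by apply: H; rewrite ler01 lexx.
apply: RI => //; try exact: ler01.
move=> u /andP[u0 u1] IH.
have key : exists ts q0 (Os : set Y) g eta,
  [/\ 0 <= ts, ts <= u, u - eta < ts, 0 < eta & liftP p x0 ts q0] /\
  [/\ cont_on Os g, (forall o, Os o -> f (g o) = o), g (p ts) = q0 ts &
      forall t, Ic 0 1 t -> `|u - t| < eta -> Os (p t)].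
  move: u0; rewrite le_eqVlt => /orP[/eqP u0|u0].
  - subst u.
    have [W [Os [g [oW Wx0 oO Ox0 [cg fg gf]]]]] := lh_inv x0.
    have [r r0 Hr] := open_ballP oO Ox0.
    have [d d0 Hd] := cp 0 (introT andP (conj (lexx 0) ler01)) r r0.
    have lq : liftP p x0 0 (fun _ => x0).
      split => //; first exact: cont_on_cst.
      by move=> t /andP[a b]; have -> : t = 0 by apply/eqP; rewrite eq_le a b.
    have g0 : g (p 0) = x0 by rewrite -fx0; have [-> _] := gf x0 Wx0.
    have HO : forall t, Ic 0 1 t -> `|0 - t| < d -> Os (p t).
      move=> t ht hd; apply: Hr; rewrite fx0; apply/ballME.
      by apply: Hd => //; apply/ballRE.
    have fg' : forall o, Os o -> f (g o) = o by move=> o /fg [].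
    exists 0, (fun _ => x0), Os, g, d; split; split => //; lra.
  - have : forall w, exists q, 0 <= w < u -> liftP p x0 w q.
      move=> w; case: (boolP (0 <= w < u)) => h.
        by have [q hq] := IH w h; exists q.
      by exists (fun _ => x0).
    move=> /choice [L HL].
    pose Qf t := L t t.
    have QfL : forall w t, 0 <= w < u -> Ic 0 w t -> Qf t = L w t.
      move=> w t /andP[w0 wu] /andP[t0 tw].
      have [c1 v1 f1] := HL w (introT andP (conj w0 wu)).
      have [c2 v2 f2] : liftP p x0 t (L t).
        by apply: HL; apply/andP; split => //; lra.
      have sub : Ic 0 t `<=` Ic 0 w by move=> y /andP[a b]; rewrite /Ic /= a /=; lra.
      apply: (uniq_fwd t0 c2 (cont_onS sub c1)) => //.
        by move=> y hy; rewrite f2 // f1 //; apply: sub.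
      by rewrite v1 v2.
      by rewrite /Ic /= t0 lexx.
    have cQ : cont_on (Ico 0 u) Qf.
      move=> t0 /andP[t00 t0u] e e0.
      pose w := (t0 + u) / 2.
      have hw : 0 <= w < u by apply/andP; split; rewrite /w; lra.
      have [cw _ _] := HL w hw.
      have [d d0 Hd] := cw t0 (introT andP (conj t00 (ltW (ltac:(rewrite /w; lra) : t0 < w)))) e e0.
      exists (Num.min d (w - t0)); first by rewrite lt_min d0 /=; rewrite /w; lra.
      move=> y /andP[y0 yu] /ballRE; rewrite lt_min => /andP[h1 h2].
      have yw : y <= w by move: h2; rewrite ltr_norml; lra.
      rewrite (QfL w t0) //; last by rewrite /Ic /= t00 /w; lra.
      rewrite (QfL w y) //; last by rewrite /Ic /= y0 yw.
      by apply: Hd; [rewrite /Ic /= y0 yw | apply/ballRE].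
    have liftQ : forall t, 0 <= t < u -> f (Qf t) = p t.
      move=> t /andP[t0 tu]; have [_ _ f1] := HL t (introT andP (conj t0 tu)).
      by apply: f1; rewrite /Ic /= t0 lexx.
    have [tn [htn [tcv [xl hxl]]]] : exists tn : nat -> R,
        (forall n, 0 <= tn n < u) /\ tn @ \oo --> u /\
        exists x : X, (Qf \o tn) @ \oo --> x.
      apply: (CP u (introT andP (conj u0 u1)) Qf) => //.
      by rewrite IcoE; apply/within_contP.
    have fxl : f xl = p u.
      apply: (@metric_seq_unique _ (p \o tn)).
        have -> : p \o tn = f \o (Qf \o tn).
          by apply/funext => n /=; rewrite liftQ.
        apply: cvg_comp; first exact: hxl. exact: cf.
      apply/cvg_ballP => e e0.
      have [d d0 Hd] := cp u (introT andP (conj (ltW u0) u1)) e e0.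
      have [N _ HN] := proj1 (cvg_ballP _ _) tcv _ d0.
      exists N => // n hn; apply: Hd; last exact: HN.
      by have /andP[a b] := htn n; rewrite /Ic /=; apply/andP; split; lra.
    have [W [Os [g [oW Wxl oO Oxl [cg fg gf]]]]] := lh_inv xl.
    rewrite fxl in Oxl.
    have [r r0 Hr] := open_ballP oO Oxl.
    have [d d0 Hd] := cp u (introT andP (conj (ltW u0) u1)) r r0.
    have [rho rho0 Hrho] := open_ballP oW Wxl.
    have [N1 _ HN1] := proj1 (cvg_ballP _ _) tcv _ d0.
    have [N2 _ HN2] := proj1 (cvg_ballP _ _) hxl _ rho0.
    pose n := maxn N1 N2.
    have /ballRE hn1 := HN1 n (leq_maxl _ _).
    have /ballME hn2 := HN2 n (leq_maxr _ _).
    have /andP[tn0 tnu] := htn n.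
    have fg' : forall o, Os o -> f (g o) = o by move=> o /fg [].
    have gts : g (p (tn n)) = L (tn n) (tn n).
      have WQ : W (Qf (tn n)) by apply: Hrho.
      have [h _] := gf _ WQ.
      by rewrite -liftQ ?tn0 //.
    have HO : forall t, Ic 0 1 t -> `|u - t| < d -> Os (p t).
      move=> t ht hd; apply: Hr; apply/ballME.
      by apply: Hd => //; apply/ballRE.
    have hlt : u - d < tn n by move: hn1; rewrite ltr_norml; lra.
    have lq := HL (tn n) (htn n).
    exists (tn n), (L (tn n)), Os, g, d; split; split => //; exact: ltW.
have [ts [q0 [Os [g [eta [[ts0 tsu ets eta0 lq0] [cg fg gts HO]]]]]]] := key.
exists eta => // w w0 wue w1.
case: (ltP w u) => [wu|uw]; first by apply: IH; rewrite w0 wu.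
exists (fun t => if t <= ts then q0 t else g (p t)).
apply: (ext_lift (Os := Os) (g := g) ts0 _ lq0) => //.
- lra.
- have sub : Ic ts w `<=` Ic 0 1 by move=> t /andP[a b]; rewrite /Ic /=; apply/andP; split; lra.
  exact: (cont_onS sub cp).
- move=> t /andP[a b]; apply: HO; first by rewrite /Ic /=; apply/andP; split; lra.
  rewrite ltr_norml; lra.
Qed.

End C.


Section D.
Context {R : realType} {Y : metricType R}.
Implicit Types (p : R -> Y).

Fixpoint pairsum p (l : seq R) : R :=
  match l with
  | x :: ((y :: _) as l') => mdist (p x) (p y) + pairsum p l'
  | _ => 0
  end.

Lemma psumE p a s : partition_sum p a s = pairsum p (a :: s).
Proof.
elim: s a => [|x s IH] a; first by rewrite /partition_sum big_ord0.
rewrite /partition_sum /= big_ord_recl /=.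
rewrite -/(pairsum p (x :: s)) -IH /partition_sum; congr (_ + _).
apply: eq_bigr => i _ /=.
rewrite /bump /=.
have hi := ltn_ord i.
by rewrite (set_nth_default x a) ?(set_nth_default x a (s := s)) //= ltnS ltnW.
Qed.

Lemma pairsum_rcons p x l y :
  pairsum p (rcons (x :: l) y) = pairsum p (x :: l) + mdist (p (last x l)) (p y).
Proof.
elim: l x => [|z l IH] x; first by rewrite /= addr0 add0r.
change (mdist (p x) (p z) + pairsum p (rcons (z :: l) y) =
  mdist (p x) (p z) + pairsum p (z :: l) + mdist (p (last z l)) (p y)).
by rewrite IH addrA.
Qed.

Lemma pairsum_rev p l : pairsum p (rev l) = pairsum p l.
Proof.
elim: l => [//|x l IH].
case: l IH => [//|y l] IH.
rewrite rev_cons.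
case E : (rev (y :: l)) => [|w m].
  by move: E => /(congr1 size); rewrite size_rev.
have wy : last w m = y.
  have := congr1 (last w) E; rewrite rev_cons last_rcons /= => ->.
  by [].
rewrite E in IH.
rewrite pairsum_rcons IH wy.
change (pairsum p (y :: l) + mdist (p y) (p x) =
  mdist (p x) (p y) + pairsum p (y :: l)).
by rewrite addrC metric_sym.
Qed.

Lemma pairsum_map p (g : R -> R) l :
  pairsum (fun t => p (g t)) l = pairsum p (map g l).
Proof.
elim: l => [//|x l IH]; case: l IH => [//|y l] IH.
change (mdist (p (g x)) (p (g y)) + pairsum (fun t => p (g t)) (y :: l) =
  mdist (p (g x)) (p (g y)) + pairsum p (map g (y :: l))).
by rewrite IH.
Qed.

Lemma rev_rect p : rectifiable p -> rectifiable (fun t => p (1 - t)).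
Proof.
move=> [cp fin]; split.
- rewrite IcE; apply/within_contP.
  have := cp; rewrite IcE => /within_contP cp'.
  move=> x /andP[x0 x1] e e0.
  have hx : Ic 0 1 (1 - x) by rewrite /Ic /=; apply/andP; split; lra.
  have [d d0 Hd] := cp' _ hx e e0.
  exists d => // y /andP[y0 y1] /ballRE hy; apply: Hd.
    by rewrite /Ic /=; apply/andP; split; lra.
  apply/ballRE.
  by rewrite (_ : 1 - x - (1 - y) = y - x) 1?distrC //; ring.
- apply: le_lt_trans fin; apply: ge_ereal_sup => _ [s [ss ls] <-].
  rewrite psumE pairsum_map.
  case/lastP: s ss ls => [|s0 t] ss ls.
    by move: ls => /= /eqP; rewrite eq_sym oner_eq0.
  rewrite last_rcons in ls; subst t.
  rewrite -rcons_cons map_rcons -pairsum_rev rev_rcons subrr -psumE.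
  apply: ereal_sup_ubound; exists (rev (map (fun t => 1 - t) (0 :: s0))) => //.
  split.
    rewrite -rev_rcons rev_sorted.
    have -> : rcons [seq 1 - t | t <- 0 :: s0] 0 =
              map (fun t => 1 - t) (rcons (0 :: s0) 1) by rewrite map_rcons subrr.
    apply: (homo_sorted (e := <=%R)) => //.
    by move=> a b ab /=; rewrite lerD2l lerN2.
  by rewrite /= rev_cons last_rcons subr0.
Qed.

End D.


Section E.
Context {R : realType} {X Y : metricType R} (f : X -> Y).
Hypothesis cf : continuous f.
Hypothesis lh : local_homeomorphism f.
Hypothesis CPall : forall p : R -> Y, rectifiable p -> continuation_property f p.

Lemma cont_on_rev01 {T : pseudoMetricType R} {q : R -> T} :
  cont_on (Ic 0 1) q -> cont_on (Ic 0 1) (fun t => q (1 - t)).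
Proof.
move=> cq x /andP[x0 x1] e e0.
have hx : Ic 0 1 (1 - x) by rewrite /Ic /=; apply/andP; split; lra.
have [d d0 Hd] := cq _ hx e e0.
exists d => // y /andP[y0 y1] /ballRE hy; apply: Hd.
  by rewrite /Ic /=; apply/andP; split; lra.
apply/ballRE.
by rewrite (_ : 1 - x - (1 - y) = y - x) 1?distrC //; ring.
Qed.

Lemma lift_uniq01 p x x' q1 q2 : liftP f p x 1 q1 -> liftP f p x' 1 q2 ->
  q1 1 = q2 1 -> x = x'.
Proof.
move=> [c1 v1 f1] [c2 v2 f2] e1.
have h := @uniq_fwd R X Y f lh 0 1 (fun t => q1 (1 - t)) (fun t => q2 (1 - t)) ler01
  (cont_on_rev01 c1) (cont_on_rev01 c2).
have := h _ _ 1; rewrite subrr v1 v2; apply => //.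
- move=> t /andP[t0 t1]; rewrite f1 ?f2 //; rewrite /Ic /=; apply/andP; split; lra.
- by rewrite subr0.
- by rewrite /Ic /= ler01 lexx.
Qed.

Definition Lift (p : R -> Y) (x : X) : R -> X :=
  match pselect (exists q, liftP f p x 1 q) with
  | left h => projT1 (cid h)
  | right _ => fun _ => x
  end.

Lemma LiftP p x : (exists q, liftP f p x 1 q) -> liftP f p x 1 (Lift p x).
Proof.
move=> h; rewrite /Lift; case: pselect => // h'.
exact: (projT2 (cid h')).
Qed.

Lemma ball_open (S : set X) :
  (forall z, S z -> exists2 r, 0 < r & forall z', mdist z z' < r -> S z') -> open S.
Proof.
move=> H; rewrite openE => z Sz; rewrite /interior.
apply/nbhs_ballP; have [r r0 Hr] := H z Sz; exists r => // z' /ballME; exact: Hr.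
Qed.

Section Cov.
Variables (y0 : Y) (U : set Y) (H : Y * R -> Y).
Hypotheses (oU : open U) (Uy0 : U y0)
  (cH : {within U `*` `[0, 1], continuous H})
  (HU : forall y t, U y -> 0 <= t <= 1 -> U (H (y, t)))
  (H0 : forall y, U y -> H (y, 0) = y0)
  (H1 : forall y, U y -> H (y, 1) = y)
  (Hrect : forall y, U y -> rectifiable (fun t => H (y, t))).

Let hp y := fun t => H (y, t).
Definition G x y := Lift (hp y) x.

Lemma cH' : cont_on (U `*` Ic 0 1) H.
Proof. by apply/within_contP; rewrite -IcE. Qed.

Lemma chp y : U y -> cont_on (Ic 0 1) (hp y).
Proof. by move=> Uy; case: (Hrect _ Uy); rewrite IcE => /within_contP. Qed.

Lemma GP {x y} : f x = y0 -> U y -> liftP f (hp y) x 1 (G x y).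
Proof.
move=> fx Uy; apply: LiftP.
apply: (@lift_exists _ _ _ f lh cf (hp y) x (Hrect _ Uy) (CPall _ (Hrect _ Uy))).
by rewrite /hp H0.
Qed.

Lemma Gcont {x} : f x = y0 -> cont_on U (fun y => G x y 1).
Proof.
move=> fx y1 Uy1.
suff P : forall w, 0 <= w <= 1 -> forall e, 0 < e -> exists2 d, 0 < d &
    forall y, U y -> ball y1 d y -> ball (G x y1 w) e (G x y w).
  by apply: P; rewrite ler01 lexx.
have P0 : forall e, 0 < e -> exists2 d, 0 < d &
    forall y, U y -> ball y1 d y -> ball (G x y1 0) e (G x y 0).
  move=> e e0; exists 1 => // y Uy _.
  have [_ -> _] := GP fx Uy1; have [_ -> _] := GP fx Uy.
  exact: ballxx.
apply: RI; first exact: ler01.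
move=> u /andP[u0 u1] IH.
have hu : Ic 0 1 u by rewrite /Ic /= u0 u1.
have [c1 v1 f1] := GP fx Uy1.
set q1 := G x y1 in c1 v1 f1 IH *.
pose x1 := q1 u.
have [W [Os [g [oW Wx1 oO Ox1 [cg fg gf]]]]] := lh_inv f lh x1.
have fx1 : f x1 = H (y1, u) := f1 u hu.
have [r r0 Hr] := open_ballP oO Ox1.
have [e1 e10 He1] := cH' (y1, u) (conj Uy1 hu) r r0.
have [rho rho0 Hrho] := open_ballP oW Wx1.
have [e2 e20 He2] := c1 u hu rho rho0.
pose e' := Num.min e1 e2.
have e'0 : 0 < e' by rewrite lt_min e10 e20.
have e'1 : e' <= e1 by rewrite ge_min lexx.
have e'2 : e' <= e2 by rewrite ge_min lexx orbT.
exists e' => // w w0 wue w1.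
case: (ltP w u) => [wu|uw]; first by apply: IH; rewrite w0 wu.
have hw : Ic 0 1 w by rewrite /Ic /= w0 w1.
have [v0 [hv0a hv0b hv0c Pv0]] : exists v0, [/\ 0 <= v0, v0 <= u, u - e' < v0 &
    forall e, 0 < e -> exists2 d, 0 < d &
    forall y, U y -> ball y1 d y -> ball (q1 v0) e (G x y v0)].
  move: u0; rewrite le_eqVlt => /orP[/eqP u0|u0].
    subst u; exists 0; split => //; lra.
  exists (Num.max 0 (u - e' / 2)).
  have h1 : 0 <= Num.max 0 (u - e' / 2) by rewrite le_max lexx.
  have h2 : Num.max 0 (u - e' / 2) < u by rewrite gt_max u0 /=; lra.
  have h3 : u - e' / 2 <= Num.max 0 (u - e' / 2) by rewrite le_max lexx orbT.
  split => //; [exact: ltW | lra | apply: IH; by rewrite h1 h2].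
move=> eps eps0.
have hv0 : Ic 0 1 v0 by rewrite /Ic /= hv0a /=; lra.
have Wq1v0 : W (q1 v0).
  apply: Hrho; apply/ballME; apply: He2 => //; apply/ballRE.
  rewrite ger0_norm; lra.
have [rho2 rho20 Hrho2] := open_ballP oW Wq1v0.
have [d1 d10 Hd1] := Pv0 rho2 rho20.
have Ow : Os (H (y1, w)).
  apply: Hr; rewrite fx1; apply/ballME; apply: He1.
    by split.
  by split; [exact: ballxx | apply/ballRE; rewrite /= ler0_norm; lra].
have [k k0 Hk] := cg (H (y1, w)) Ow eps eps0.
have [d2 d20 Hd2] := cH' (y1, w) (conj Uy1 hw) k k0.
pose d := Num.min e1 (Num.min d1 d2).
have d0 : 0 < d by rewrite !lt_min e10 d10 d20.
have dd1 : d <= e1 by rewrite ge_min lexx.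
have dd2 : d <= d1 by rewrite !ge_min lexx orbT.
have dd3 : d <= d2 by rewrite !ge_min lexx !orbT.
exists d => // y Uy byd.
have by1 : ball y1 e1 y by apply: (le_ball dd1).
have by2 : ball y1 d1 y by apply: (le_ball dd2).
have by3 : ball y1 d2 y by apply: (le_ball dd3).
have HOs : forall s, Ic v0 w s -> Os (H (y, s)).
  move=> s /andP[s1 s2]; apply: Hr; rewrite fx1; apply/ballME; apply: He1.
    by split => //; rewrite /Ic /=; apply/andP; split; lra.
  by split => //; apply/ballRE; rewrite /= ltr_norml; lra.
have [c2 v2 f2] := GP fx Uy.
have sub : Ic v0 w `<=` Ic 0 1 by move=> s /andP[a b]; rewrite /Ic /=; apply/andP; split; lra.
have Gyw : G x y w = g (H (y, w)).
  have cgh : cont_on (Ic v0 w) (fun s => g (H (y, s))).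
    exact: (cont_on_comp (cont_onS sub (chp _ Uy)) cg HOs).
  apply: (@uniq_fwd _ _ _ f lh v0 w (G x y) (fun s => g (H (y, s))) (le_trans hv0b uw) (cont_onS sub c2) cgh).
  - move=> s hs; rewrite f2; last exact: sub.
    by have [-> _] := fg _ (HOs s hs).
  - have WG : W (G x y v0).
      by apply: Hrho2; apply/ballME; apply: Hd1.
    have [h _] := gf _ WG.
    by rewrite -{1}h f2.
  - by rewrite /Ic /= lexx andbT; lra.
have G1w : q1 w = g (H (y1, w)).
  have Wq1w : W (q1 w).
    apply: Hrho; apply/ballME; apply: He2 => //; apply/ballRE.
    rewrite ler0_norm; lra.
  have [h _] := gf _ Wq1w.
  by rewrite -{1}h f1.
rewrite Gyw G1w; apply: Hk; first by apply: HOs; rewrite /Ic /= lexx andbT; lra.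
apply: Hd2; first by split => //.
by split => //; exact: ballxx.
Qed.

Definition sheet x := [set z | exists2 y, U y & z = G x y 1].

Lemma sheet_f {x y} : f x = y0 -> U y -> f (G x y 1) = y.
Proof.
move=> fx Uy; have [_ _ f2] := GP fx Uy.
rewrite f2; last by rewrite /Ic /= ler01 lexx.
by rewrite /hp H1.
Qed.

Lemma sheet_open x : f x = y0 -> open (sheet x).
Proof.
move=> fx; apply: ball_open => _ [y1 Uy1 ->].
set z0 := G x y1 1.
have fz0 : f z0 = y1 by exact: sheet_f.
have [rho rho0 Hinj] := lh_inj f lh z0.
have [k k0 Hk] := Gcont fx y1 Uy1 rho rho0.
have [rU rU0 HrU] := open_ballP oU Uy1.
have cf' : cont_on setT f by apply/within_contP; exact: continuous_subspaceT.
have mk0 : 0 < Num.min k rU by rewrite lt_min k0 rU0.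
have [dl dl0 Hdl] := cf' z0 I _ mk0.
exists (Num.min dl rho); first by rewrite lt_min dl0 rho0.
move=> z; rewrite lt_min => /andP[dz1 dz2].
have /ballME := Hdl z I (proj2 (ballME _ _ _ _) dz1).
rewrite fz0 lt_min => /andP[h1 h2].
have Ufz : U (f z) by exact: HrU.
have /ballME hG := Hk (f z) Ufz (proj2 (ballME _ _ _ _) h1).
exists (f z) => //; apply: Hinj dz2 hG _.
by rewrite sheet_f.
Qed.

Lemma sheet_homeo x : f x = y0 -> homeo_onto f (sheet x) U.
Proof.
move=> fx; split; [|split; [|split]].
- apply/seteqP; split.
    by move=> _ [_ [y Uy ->] <-]; rewrite sheet_f.
  by move=> y Uy; exists (G x y 1); [exists y | rewrite sheet_f].
- exact: continuous_subspaceT.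
- move=> z z'; rewrite !inE => -[y Uy ->] [y' Uy' ->] e.
  by rewrite !sheet_f // in e; rewrite e.
- exists (fun y => G x y 1); split.
    by apply/within_contP; exact: Gcont.
  by move=> _ [y Uy ->]; rewrite sheet_f.
Qed.

Lemma evenly : evenly_covered f U.
Proof.
exists [set S | exists2 x, f x = y0 & S = sheet x]; split; [|split].
- by move=> S [x fx ->]; split; [exact: sheet_open | exact: sheet_homeo].
- move=> S S' [x fx ->] [x' fx' ->] neq.
  rewrite -subset0 => z [[y Uy ez] [y' Uy' ez']].
  have yy' : y = y' by rewrite -(sheet_f fx Uy) -ez ez' sheet_f.
  subst y'.
  have := lift_uniq01 _ _ _ _ _ (GP fx Uy) (GP fx' Uy).
  by rewrite -ez -ez' => /(_ erefl) xx'; apply: neq; rewrite xx'.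
- apply/seteqP; split.
  + move=> z /= Ufz.
    set y := f z in Ufz *.
    have rr := rev_rect _ (Hrect _ Ufz).
    have fz : f z = (fun t => H (y, 1 - t)) 0 by rewrite /= subr0 H1.
    have [q [cq vq fq]] := @lift_exists _ _ _ f lh cf _ z rr (CPall _ rr) fz.
    have fx' : f (q 1) = y0.
      by rewrite fq /= ?subrr ?H0 // /Ic /= ler01 lexx.
    have lq' : liftP f (hp y) (q 1) 1 (fun t => q (1 - t)).
      split; [exact: cont_on_rev01 cq | by rewrite subr0 |].
      move=> t /andP[t0 t1]; rewrite fq; last by rewrite /Ic /=; apply/andP; split; lra.
      by rewrite /hp /=; congr (H (y, _)); ring.
    have [c2 v2 f2] := GP fx' Ufz.
    have [c3 v3 f3] := lq'.
    have e := @uniq_fwd _ _ _ f lh 0 1 (G (q 1) y) (fun t => q (1 - t)) ler01 c2 c3.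
    have {}e : G (q 1) y 1 = q (1 - 1).
      apply: e; last by rewrite /Ic /= ler01 lexx.
        by move=> t ht; rewrite f2 ?f3.
      by rewrite v2 v3.
    exists (sheet (q 1)); first by exists (q 1).
    by exists y => //; rewrite e subrr vq.
  + by move=> z [S [x fx ->] [y Uy ->]]; rewrite /preimage /= sheet_f.
Qed.

End Cov.

End E.


Theorem theorem4 (R : realType) (X Y : metricType R) (f : X -> Y) :
  continuous f -> complete_metric X -> no_isolated_points X ->
  (forall p : R -> Y, rectifiable p -> bounded_path_lifting_property f p) ->
  (forall p : R -> Y, rectifiable p -> continuation_property f p) /\
  (path_connected_space Y -> locally_R_contractible Y -> local_homeomorphism f ->
     covering_projection f).
Proof.
move=> cf cX _ bpl.
have CPall : forall p : R -> Y, rectifiable p -> continuation_property f p.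
  by move=> p rp; apply: part1 cX rp (bpl p rp).
split => // _ lRc lhf; split => // y0.
have [U [oU [Uy0 [H [cH [HU [Ht0 [H0 [H1 Hr]]]]]]]]] := lRc y0.
exists U; split => //; split => //.
exact: (evenly f cf lhf CPall y0 U H oU cH H0 H1 Hr).
Qed.
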